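(* In the standard LLP setup, suppose $K=\overline{K}$. If either $N_u(L(G))$ is defined and $N\ge N_u(L(G))+1$, or $N_u(K)$ is defined and $N\ge N_u(K)+2$, then $L(G,\gamma^N_{optm})=\overline{K^\uparrow}$.
   Context: Standard LLP setup. $\Sigma=\Sigma_c\,\dot\cup\,\Sigma_{uc}$ is a finite alphabet partitioned into controllable and uncontrollable events. The plant $G$ has generated language $L(G)$ and marked language $L_m(G)$ with $L(G)=\overline{L_m(G)}$ ($\overline{M}$ = set of prefixes of strings in $M$). The legal language $K\subseteq L_m(G)$ satisfies $K=\overline{K}\cap L_m(G)$. For a prefix-closed $L$, $M$ is controllable w.r.t. $L$ if $\overline{M}\Sigma_{uc}\cap L\subseteq\overline{M}$; $K^\uparrow$ is the supremal sublanguage of $K$ controllable w.r.t. $L(G)$. For a language $L$ and $s\in\Sigma^*$: $L/s=\{t: st\in L\}$; $L|_N=\{t\in L:|t|\le N\}$; $\Sigma_{L(G)}(s)=\{\sigma\in\Sigma: s\sigma\in L(G)\}$. $M^{\uparrow/s|_N}$ is the supremal sublanguage of $M$ controllable w.r.t. $L(G)/s|_N$. Optimistic attitude: $f^N_{optm}(s)=[K/s|_N\cup(\overline{K}/s|_N\setminus\overline{K}/s|_{N-1})]^{\uparrow/s|_N}$; control policy $\gamma^N_{optm}(s)=(\overline{f^N_{optm}(s)}\cap\Sigma)\cup(\Sigma_{uc}\cap\Sigma_{L(G)}(s))$. Closed-loop language $L(G,\gamma)$: $\epsilon\in L(G,\gamma)$, and $s\sigma\in L(G,\gamma)$ iff $s\in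 L(G,\gamma)$, $s\sigma\in L(G)$, $\sigma\in\gamma(s)$. For a language $L$, $N_u(L)=\max\{|t|: t\in\Sigma_{uc}^*,\ \exists u,v\in\Sigma^*,\ utv\in L\}$, the length of the longest string of uncontrollable events occurring as a substring of a string of $L$, if this maximum exists; otherwise $N_u(L)$ is undefined. *)

(* Defs.v *)
From mathcomp Require Import all_boot.
Set Implicit Arguments. Unset Strict Implicit. Unset Printing Implicit Defensive.

Definition lang (Sigma : finType) := seq Sigma -> Prop.

Section LLP.
Variable Sigma : finType.
Implicit Types (L M : lang Sigma) (s t : seq Sigma).

Definition lsub L M := forall t, L t -> M t.
Definition lequiv L M := forall t, L t <-> M t.
Definition lunion L M : lang Sigma := fun t => L t \/ M t.
Definition linter L M : lang Sigma := fun t => L t /\ M t.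
Definition ldiff L M : lang Sigma := fun t => L t /\ ~ M t.

Definition pclos M : lang Sigma := fun t => exists u, M (t ++ u).
Definition lquot L s : lang Sigma := fun t => L (s ++ t).
Definition ltrunc L (N : nat) : lang Sigma := fun t => L t /\ size t <= N.
(* L|_{N-1} with integer N-1, i.e. strings of length < N (empty for N = 0) *)
Definition ltrunc_pred L (N : nat) : lang Sigma := fun t => L t /\ size t < N.

(* uc : the uncontrollable events; controllable events are ~~ uc *)
Definition controllable (uc : pred Sigma) M L :=
  forall t sigma, pclos M t -> uc sigma -> L (rcons t sigma) ->
    pclos M (rcons t sigma).

Definition supcon (uc : pred Sigma) M L : lang Sigma :=
  fun t => exists M', lsub M' M /\ controllable uc M' L /\ M' t.

Definition f_optm (uc : pred Sigma) (LG K : lang Sigma) (N : nat) s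
  : lang Sigma :=
  supcon uc
    (lunion (ltrunc (lquot K s) N)
            (ldiff (ltrunc (lquot (pclos K) s) N)
                   (ltrunc_pred (lquot (pclos K) s) N)))
    (ltrunc (lquot LG s) N).

Definition gamma_optm (uc : pred Sigma) (LG K : lang Sigma) (N : nat) s
  (sigma : Sigma) : Prop :=
  pclos (f_optm uc LG K N s) [:: sigma] \/ (uc sigma /\ LG (rcons s sigma)).

Inductive closed_loop (LG : lang Sigma) (gamma : seq Sigma -> Sigma -> Prop)
  : seq Sigma -> Prop :=
| cl_nil : closed_loop LG gamma [::]
| cl_snoc s sigma : closed_loop LG gamma s -> LG (rcons s sigma) ->
    gamma s sigma -> closed_loop LG gamma (rcons s sigma).

(* N_u(L) is defined and equals m *)
Definition Nu_is (uc : pred Sigma) L (m : nat) : Prop :=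
  (exists t u v, all uc t /\ L (u ++ t ++ v) /\ size t = m) /\
  (forall t u v, all uc t -> L (u ++ t ++ v) -> size t <= m).

End LLP.

(* Main.v *)
Require Import Defs.
From mathcomp Require Import all_boot.
Set Implicit Arguments.

Definition Dl (Sigma : finType) (uc : pred Sigma) (LG K : lang Sigma) : lang Sigma :=
  fun s => K s /\ forall p q v, s = p ++ q -> all uc v -> LG (p ++ v) -> K (p ++ v).

Lemma D_pre (Sigma : finType) (uc : pred Sigma) (LG K : lang Sigma) t u :
  (forall t u, K (t ++ u) -> K t) -> Dl uc LG K (t ++ u) -> Dl uc LG K t.
Proof.
move=> Kpc [Hk Hp]; split; first exact: Kpc Hk.
move=> p q v E; apply: (Hp p (q ++ u)); by rewrite E catA.
Qed.

Lemma D_step (Sigma : finType) (uc : pred Sigma) (LG K : lang Sigma) t u x :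
  Dl uc LG K (t ++ u) -> uc x -> LG (rcons t x) -> Dl uc LG K (rcons t x).
Proof.
move=> [Hk Hp] ux Hl; split.
  rewrite -cats1; apply: (Hp t u [:: x]) => //=; first by rewrite ux.
  by rewrite cats1.
move=> p q v; case: (lastP q) => [|q' y].
  rewrite cats0 => <- av Hv; rewrite cat_rcons; apply: (Hp t u) => //=.
  by rewrite ux av. by rewrite -cat_rcons.
rewrite -rcons_cat => /rcons_inj [E _] av Hv.
apply: (Hp p (q' ++ u)) => //; by rewrite E catA.
Qed.

Theorem theorem9 (Sigma : finType) (uc : pred Sigma)
  (LG Lm K : lang Sigma) (N : nat) :
  lequiv LG (pclos Lm) ->
  lsub K Lm ->
  lequiv K (linter (pclos K) Lm) ->
  lequiv K (pclos K) ->
  (exists t, supcon uc K LG t) ->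
  ((exists m, Nu_is uc LG m /\ m + 1 <= N) \/
   (exists m, Nu_is uc K m /\ m + 2 <= N)) ->
  lequiv (closed_loop LG (gamma_optm uc LG K N)) (pclos (supcon uc K LG)).
Proof.
move=> HLG HKLm _ HKc HsupNE HN.
have Kpc : forall t u, K (t ++ u) -> K t.
  by move=> t u H; apply/(HKc t).2; exists u.
have LGpc : forall t u, LG (t ++ u) -> LG t.
  move=> t u /(HLG _).1 [w Hw]; apply/(HLG t).2; exists (u ++ w); by rewrite catA.
have KLG : forall t, K t -> LG t.
  by move=> t Ht; apply/(HLG t).2; exists [::]; rewrite cats0; apply: HKLm.
have N1 : 0 < N by case: HN => [[m [_ H]]|[m [_ H]]]; by apply: leq_trans H; rewrite addnC.
have Dcon : controllable uc (Dl uc LG K) LG.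
  move=> t x [u Hu] ux Hl; exists [::]; rewrite cats0; exact: D_step Hu ux Hl.
have DK : forall t, Dl uc LG K t -> K t by move=> t [].
have supD : forall t, supcon uc K LG t -> Dl uc LG K t.
  move=> t [M0 [HM0 [HC HM]]].
  have PK : forall w, pclos M0 w -> K w by move=> w [u Hu]; apply: (Kpc w u); apply: HM0.
  split; first exact: HM0.
  move=> p q v E.
  have Hp : forall v, all uc v -> LG (p ++ v) -> pclos M0 (p ++ v).
    elim/last_ind => [|v' z IH2].
      by move=> _ _; rewrite cats0; exists q; rewrite -E.
    rewrite all_rcons => /andP [uz av] Hl.
    rewrite -rcons_cat; apply: HC => //; last by rewrite rcons_cat.
    apply: IH2 => //; apply: (LGpc _ [:: z]); by rewrite cats1 rcons_cat.
  by move=> av Hl; apply: PK; apply: Hp.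
have supP : forall t, pclos (supcon uc K LG) t -> Dl uc LG K t.
  by move=> t [u /supD]; apply: D_pre.
have D0 : Dl uc LG K [::].
  by case: HsupNE => t Ht; apply: supP; exists t.
move=> s; split.
- move=> Hcl; exists [::]; rewrite cats0; exists (Dl uc LG K); split=> //; split=> //.
  elim: Hcl => [|s0 x _ IH Hl Hg] //.
  have key : forall v, all uc v -> LG (s0 ++ x :: v) -> K (s0 ++ x :: v).
    case: Hg => [[u0 [M' [Hsub [HC HM]]]] | [ux _]]; last first.
      move=> v av Hv; apply: (IH.2 s0 [::]) => //=; first by rewrite cats0.
      by rewrite ux av.
    have PK : forall w, pclos M' w -> K (s0 ++ w).
      move=> w [u /Hsub Hu]; apply: (Kpc _ u); rewrite -catA; case: Hu => [[H _]|[[H _] _]]; [exact: H | exact/(HKc _).2].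
    have claim : forall v, all uc v -> LG (s0 ++ x :: v) -> pclos M' (x :: v).
      elim/last_ind => [|v z IH2]; first by move=> _ _; exists u0.
      rewrite all_rcons => /andP [uz av] Hv.
      have Hv' : LG (s0 ++ x :: v).
        by apply: (LGpc _ [:: z]); rewrite -catA /= cats1 -rcons_cons.
      have Hp := IH2 av Hv'.
      rewrite -rcons_cons; apply: HC => //; split; first by rewrite /lquot rcons_cons.
      rewrite size_rcons /=.
      case: HN => [[m [[_ Hm] Hmn]] | [m [[_ Hm] Hmn]]].
        have := Hm (rcons v z) (rcons s0 x) [::].
        rewrite all_rcons uz av cats0 cat_rcons => /(_ isT Hv).
        rewrite size_rcons => H; apply: leq_trans Hmn; by rewrite addn1.
      have := Hm v (rcons s0 x) [::].
      rewrite cats0 cat_rcons => /(_ av (PK _ Hp)) H.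
      apply: leq_trans Hmn; by rewrite addn2.
    by move=> v av Hv; apply: PK; apply: claim.
  split; first by rewrite -cats1; apply: key => //; rewrite cats1.
  move=> p q v; case: (lastP q) => [|q' y].
    rewrite cats0 => <- av Hv; rewrite cat_rcons; apply: key => //.
    by rewrite -cat_rcons.
  rewrite -rcons_cat => /rcons_inj [E _] av Hv.
  by apply: (IH.2 p q') => //; rewrite E.
- move/supP; elim/last_ind: s => [|s x IH] Hs; first by constructor.
  have Hs0 : Dl uc LG K s by apply: (@D_pre _ uc LG K s [:: x]) => //; rewrite cats1.
  apply: cl_snoc; [exact: IH | by case: Hs => HK _; apply: KLG | ].
  case ux: (uc x); first by right; split=> //; case: Hs => HK _; apply: KLG.
  left; exists [::]; exists (fun t => Dl uc LG K (s ++ t) /\ size t <= N).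
  split; first by move=> t [Ht Hsz]; left; split=> //; case: Ht.
  split; last by rewrite cats1; split.
  move=> t y [u [Hu Hsz]] uy [Hl Hsz2]; exists [::]; rewrite cats0; split=> //.
  rewrite -rcons_cat; apply: (@D_step _ uc LG K (s ++ t) u) => //; first by rewrite -catA.
  by rewrite rcons_cat.
Qed.
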